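(* For all integers $0\le k\le n$, $$\binom{n}{k}_F\equiv \begin{cases} 0 & \text{if } n\equiv 0 \pmod 3 \text{ and } k\equiv 1\pmod 3,\\[4pt] \dbinom{\lceil 2n/3\rceil}{\lceil 2k/3\rceil} & \text{if } n\equiv 1 \pmod 3 \text{ and } k\equiv 0\pmod 3,\\[8pt] \dbinom{\lfloor 2n/3\rfloor}{\lfloor 2k/3\rfloor} & \text{otherwise}, \end{cases} \pmod 2,$$ where $\binom{a}{b}$ denotes the ordinary binomial coefficient (equal to $0$ if $b<0$ or $b>a$), and $\lceil\cdot\rceil,\lfloor\cdot\rfloor$ are the ceiling and floor functions.
   Context: The Fibonacci numbers are defined by $F_0=0$, $F_1=1$, $F_n=F_{n-1}+F_{n-2}$ for $n\ge 2$. For $n\ge 0$ let $n!_F=F_1F_2\cdots F_n$ (with $0!_F=1$), and for $0\le k\le n$ define the Fibonomial coefficient $\binom{n}{k}_F=\dfrac{n!_F}{k!_F\,(n-k)!_F}$; by convention $\binom{n}{k}_F=0$ if $k<0$ or $k>n$. *)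

(* Defs.v *)
From mathcomp Require Import all_boot.
Set Implicit Arguments. Unset Strict Implicit. Unset Printing Implicit Defensive.

Fixpoint fib (n : nat) : nat :=
  match n with
  | 0 => 0
  | 1 => 1
  | (m.+1 as p).+1 => fib p + fib m
  end.

Definition fibfact (n : nat) : nat := \prod_(1 <= i < n.+1) fib i.

(* Fibonomial coefficient: n!_F / (k!_F (n-k)!_F) for k <= n, 0 otherwise.
   The division is exact (classical fact), so nat division is faithful. *)
Definition fibonomial (n k : nat) : nat :=
  if k <= n then fibfact n %/ (fibfact k * fibfact (n - k)) else 0.

(* Main.v *)
Require Import Defs.
From mathcomp Require Import all_boot zify all_algebra ring.

Definition Rf n k :=
  if (n %% 3 == 0) && (k %% 3 == 1) then 0
  else if (n %% 3 == 1) && (k %% 3 == 0) then 'C((2 * n + 2) %/ 3, (2 * k + 2) %/ 3)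
  else 'C((2 * n) %/ 3, (2 * k) %/ 3).

Definition T r s a b :=
  match r, s with
  | 0, 0 => 'C(2*a, 2*b)
  | 0, 1 => 0
  | 0, _ => 'C(2*a, (2*b).+1)
  | 1, 0 => 'C((2*a).+1, 2*b)
  | 1, 1 => 'C(2*a, 2*b)
  | 1, _ => 'C(2*a, (2*b).+1)
  | _, 0 => 'C((2*a).+1, 2*b)
  | _, 1 => 'C((2*a).+1, 2*b)
  | _, _ => 'C((2*a).+1, (2*b).+1)
  end.

Lemma RfE a r b s : r < 3 -> s < 3 -> Rf (3*a+r) (3*b+s) = T r s a b.
Proof.
have M x y : (3*x+y)%%3 = y%%3 by lia.
have D1 x y : (2*(3*x+y))%/3 = 2*x + (2*y)%/3 by lia.
have D2 x y : (2*(3*x+y)+2)%/3 = 2*x + (2*y+2)%/3 by lia.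
rewrite /Rf !M !D1 !D2.
case: r => [|[|[|r]]] // _; case: s => [|[|[|s]]] // _ /=; rewrite ?addn0 ?addn1 //.
Qed.


Lemma RfE' m j : Rf m j = T (m %% 3) (j %% 3) (m %/ 3) (j %/ 3).
Proof. rewrite {1}(_ : m = 3*(m%/3) + m%%3) ?RfE; try lia. by rewrite {1}(_ : j = 3*(j%/3) + j%%3) ?RfE; try lia. Qed.

Ltac simp3 a b := repeat match goal with
 | |- context[?e %% 3] => first [ have -> : e %% 3 = 0 by lia | have -> : e%%3 = 1 by lia | have -> : e %%3 = 2 by lia ]
 | |- context[?e %/ 3] => first [ have -> : e %/ 3 = a by lia | have -> : e %/ 3 = a.+1 by lia
                                | have -> : e %/ 3 = b by lia | have -> : e %/ 3 = b.+1 by lia ]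
 end.

Lemma Rf_rec n k : k <= n ->
  Rf n.+1 k.+1 = ((n - k + 1) %% 3 != 0) * Rf n k + (k %% 3 != 0) * Rf n k.+1.
Proof.
have [a [r [-> Hr]]] : exists a r, n = 3*a + r /\ r < 3 by exists (n%/3), (n%%3); lia.
have [b [s [-> Hs]]] : exists b s, k = 3*b + s /\ s < 3 by exists (k%/3), (k%%3); lia.
move=> Hkn.
rewrite !RfE'.
case: r Hr Hkn => [|[|[|r]]] // _ Hkn; case: s Hs Hkn => [|[|[|s]]] // _ Hkn; simp3 a b; rewrite /T /=.
all: rewrite ?mul1n ?mul0n ?addn0 ?add0n ?mulnS ?add2n ?binS //; try apply: addnC.
Qed.



Ltac simp3' a b := repeat match goal with
 | |- context[?e %% 3] => first [ have -> : e %% 3 = 0 by lia | have -> : e%%3 = 1 by lia | have -> : e %%3 = 2 by lia ]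
 | |- context[?e %/ 3] => first [ have -> : e %/ 3 = a by lia | have -> : e %/ 3 = a.+1 by lia
                                | have -> : e %/ 3 = b by lia | have -> : e %/ 3 = b.+1 by lia ]
 end.

Lemma Rf0 n k : n < k -> Rf n k = 0.
Proof.
have [a [r [-> Hr]]] : exists a r, n = 3*a + r /\ r < 3 by exists (n%/3), (n%%3); lia.
have [b [s [-> Hs]]] : exists b s, k = 3*b + s /\ s < 3 by exists (k%/3), (k%%3); lia.
move=> Hkn; rewrite RfE'.
case: r Hr Hkn => [|[|[|r]]] // _ Hkn; case: s Hs Hkn => [|[|[|s]]] // _ Hkn; simp3' a b;
  rewrite /T //= bin_small //; lia.
Qed.

Fixpoint G n k := match n, k with
  | 0, 0 => 1
  | 0, _ => 0
  | _.+1, 0 => 1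
  | n'.+1, k'.+1 => fib (n' - k' + 1) * G n' k' + fib k' * G n' k'.+1
  end.

Lemma fibSS n : fib n.+2 = fib n.+1 + fib n. Proof. by []. Qed.

Lemma fib_add a b : fib (a + b + 1) = fib a.+1 * fib b.+1 + fib a * fib b.
Proof.
elim: a b => [|a IH] b; first by rewrite add0n addn1 (_ : fib 1 = 1) // (_ : fib 0 = 0) //; lia.
have -> : a.+1 + b + 1 = a + b.+1 + 1 by lia.
rewrite IH !fibSS; lia.
Qed.

Lemma fib_odd m : odd (fib m) = (m %% 3 != 0).
Proof.
elim/ltn_ind: m => m IH.
case: m IH => [|[|[|m]]] IH //.
have -> : fib m.+3 = fib m + 2 * fib m.+1 by rewrite !fibSS; lia.
rewrite oddD oddM /= addbF IH //; lia.
Qed.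


Lemma fib_pos m : 0 < fib m.+1.
Proof.
elim/ltn_ind: m => m IH. case: m IH => [|[|m]] IH //.
rewrite fibSS. have := IH m.+1 (ltnSn _). lia.
Qed.

Lemma fibfactS n : fibfact n.+1 = fibfact n * fib n.+1.
Proof. by rewrite /fibfact big_nat_recr. Qed.

Lemma fibfact_pos n : 0 < fibfact n.
Proof. elim: n => [|n IH]; first by rewrite /fibfact big_geq. rewrite fibfactS muln_gt0 IH fib_pos. done. Qed.

Lemma G0 n k : n < k -> G n k = 0.
Proof.
elim: n k => [|n IH] [|k] //= H.
rewrite !IH //; lia.
Qed.

Lemma GE n k : k <= n -> G n k * (fibfact k * fibfact (n - k)) = fibfact n.
Proof.
elim: n k => [|n IH] [|k] //= H.
- by rewrite /fibfact !big_geq.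
- by rewrite subn0 mul1n /fibfact big_geq // mul1n.
- rewrite subSS fibfactS mulnDl.
  have E1 : fib (n - k + 1) * G n k * (fibfact k * fib k.+1 * fibfact (n - k))
          = fib (n - k + 1) * fib k.+1 * fibfact n.
    by rewrite -(IH k); (lia || ring).
  rewrite E1.
  case: (ltnP k n) => Hk.
  + have -> : fibfact (n - k) = fibfact (n - k.+1) * fib (n - k).
      by rewrite (_ : n - k = (n - k.+1).+1) ?fibfactS //; lia.
    have E2 : fib k * G n k.+1 * (fibfact k * fib k.+1 * (fibfact (n - k.+1) * fib (n - k)))
       = fib k * fib (n - k) * fibfact n.
      rewrite -(IH k.+1) ?fibfactS; (lia || ring).
    rewrite E2 fibfactS -mulnDl.
    have -> : fib (n - k + 1) * fib k.+1 + fib k * fib (n - k) = fib n.+1.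
      have := fib_add k (n - k). rewrite (_ : k + (n - k) + 1 = n.+1); last lia.
      rewrite (_ : (n - k).+1 = n - k + 1); last lia. lia.
    lia.
  + have Ekn : k = n by lia. subst k.
    by rewrite G0 // subnn muln0 mul0n addn0 add0n fibfactS (_ : fib 1 = 1) // mul1n mulnC.
Qed.

Lemma fibonomialE n k : k <= n -> fibonomial n k = G n k.
Proof.
move=> H; rewrite /fibonomial H -(GE n k H) mulnK // muln_gt0 !fibfact_pos //.
Qed.

Lemma mod2L a b c d : (a*b + c*d) %% 2 = ((a%%2)*(b%%2) + (c%%2)*(d%%2)) %% 2.
Proof. by rewrite -modnDm -modnMm -(modnMm c) modnDm. Qed.

Lemma bmod2 (x : bool) : (x : nat) %% 2 = x. Proof. by case: x. Qed.

Lemma GS n k : G n.+1 k.+1 = fib (n - k + 1) * G n k + fib k * G n k.+1.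
Proof. by []. Qed.

Lemma GR n k : G n k %% 2 = Rf n k %% 2.
Proof.
elim: n k => [|n IH] [|k] //.
- by rewrite /= (@Rf0 0 k.+1).
- rewrite /Rf (_ : (2*0+2)%/3 = 0) // (_ : (2*0)%/3 = 0) // !bin0 andbF /=; by case: ifP.
- case: (ltnP n k) => Hk.
    by rewrite G0 ?(@Rf0 n.+1 k.+1).
  rewrite Rf_rec // GS mod2L [in RHS]mod2L !IH !bmod2. by rewrite !(modn2 (fib _)) !fib_odd.
Qed.

Theorem mainTheorem3 (n k : nat) : k <= n ->
  fibonomial n k =
    (if (n %% 3 == 0) && (k %% 3 == 1) then 0
     else if (n %% 3 == 1) && (k %% 3 == 0) then 'C((2 * n + 2) %/ 3, (2 * k + 2) %/ 3)
     else 'C((2 * n) %/ 3, (2 * k) %/ 3)) %[mod 2].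
Proof. move=> H; rewrite fibonomialE // GR. by []. Qed.
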